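(* Let $p$ be a prime and write $T_p(z)=\prod_{j=1}^{\infty}(1-z^{p^{j}})^{-1/p^{j}}=\sum_{n\ge0}t_p(n)z^n$ for $|z|<1$. For all $n\ge0$, the coefficient $t_p(n)$ is a rational number whose denominator contains no prime factor other than $p$; that is, \[ t_p(n)\in\left\{\frac{a}{p^k}: a\in\mathbb{Z},\ k\ge 0\right\}. \]
   Context: For $|z|<1$, each factor $(1-z^{p^j})^{-1/p^j}$ is defined using the principal branch; the product converges absolutely and defines an analytic function on the open unit disk, whose Taylor expansion at $0$ has coefficients $t_p(n)$. *)

(* Defs.v *)
From mathcomp Require Import all_boot all_order all_algebra.
From mathcomp Require Import all_classical all_reals all_analysis.
Set Implicit Arguments. Unset Strict Implicit. Unset Printing Implicit Defensive.
Import Order.TTheory GRing.Theory Num.Theory.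
Local Open Scope ring_scope.

(* N-th partial product  prod_{j=1}^{N} (1 - z^{p^j})^{-1/p^j},
   for real z with |z| < 1 (then 1 - z^{p^j} > 0 and the principal-branch
   power is the real power powR). *)
Definition Tp_partial (R : realType) (p : nat) (z : R) (N : nat) : R :=
  \prod_(1 <= j < N.+1) powR (1 - z ^+ (p ^ j)) (- ((p ^ j)%:R)^-1).

Definition in_Z_inv_p (R : realType) (p : nat) (x : R) : Prop :=
  exists (a : int) (k : nat), x = a%:~R / (p ^ k)%:R.

(* Main.v *)
Require Import Defs.
From HB Require Import structures.
From mathcomp Require Import all_boot all_order all_algebra.
From mathcomp Require Import all_classical all_reals all_analysis.
From mathcomp Require Import ring lra.
Import Order.TTheory GRing.Theory Num.Theory numFieldNormedType.Exports.
Set Implicit Arguments.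
Unset Strict Implicit.
Local Open Scope classical_set_scope.
Local Open Scope ring_scope.

Definition Sq (R : realType) (q : nat) : {pred R} :=
  fun x => `[< exists (a : int) (k : nat), x = a%:~R / ((q.+1) ^ k)%:R >].
Arguments Sq : clear implicits.

Lemma Sq_closed (R : realType) (q : nat) : subring_closed (Sq R q).
Proof.
have nz k : ((q.+1) ^ k)%:R != 0 :> R by rewrite pnatr_eq0 expn_eq0.
split.
- apply/asboolP; exists 1, 0%N; by rewrite expn0 divr1.
- move=> x y /asboolP [a [k ->]] /asboolP [b [l ->]]; apply/asboolP.
  exists (a * ((q.+1) ^ l)%:Z - b * ((q.+1) ^ k)%:Z), (k + l)%N.
  rewrite rmorphB !rmorphM /= !pmulrn expnD PoszM rmorphM /=.
  field; by rewrite !nz.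
- move=> x y /asboolP [a [k ->]] /asboolP [b [l ->]]; apply/asboolP.
  exists (a * b), (k + l)%N.
  rewrite !rmorphM /= !pmulrn expnD PoszM rmorphM /=.
  field; by rewrite !nz.
Qed.

HB.instance Definition _ (R : realType) (q : nat) :=
  GRing.isSubringClosed.Build R (Sq R q) (Sq_closed R q).

Lemma Sq_inv (R : realType) (q : nat) : (q.+1%:R)^-1 \in Sq R q.
Proof. apply/asboolP; exists 1, 1%N; by rewrite expn1 div1r. Qed.


Lemma small_zero (R : realType) (a D e : R) : 0 <= a -> 0 <= D -> 0 < e ->
  (forall z, 0 < z -> z < e -> a <= D * z) -> a = 0.
Proof.
move=> a0 D0 e0 H; apply/eqP; rewrite eq_le a0 andbT; apply/negP => /negP.
rewrite -ltNge => apos.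
set w := a / (2 * (D + 1)).
have w0 : 0 < w by rewrite divr_gt0 // mulr_gt0 // ltr_wpDl.
have Dw : (D + 1) * w = a / 2.
  rewrite /w; field; by rewrite gt_eqF // ltr_wpDl.
set z := Num.min w (e / 2).
have z0 : 0 < z by rewrite lt_min w0 divr_gt0.
have ze : z < e by rewrite gt_min; apply/orP; right; lra.
have zw : z <= w by rewrite ge_min lexx.
have := H z z0 ze.
have : D * z <= (D + 1) * w.
  apply: (@le_trans _ _ ((D + 1) * z)); first by rewrite ler_wpM2r ?ltW //; lra.
  by rewrite ler_wpM2l // addr_ge0.
lra.
Qed.

Lemma horner_bound (R : realType) (Q : {poly R}) (z : R) : 0 <= z -> z <= 1 ->
  `|Q.[z]| <= \sum_(i < size Q) `|Q`_i|.
Proof.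
move=> z0 z1; rewrite horner_coef.
apply: (le_trans (ler_norm_sum _ _ _)); apply: ler_sum => i _.
by rewrite normrM normrX (ger0_norm z0) ler_piMr // exprn_ile1.
Qed.

Lemma polyO0 (R : realType) (P : {poly R}) (C d : R) (m : nat) : 0 < d ->
  (forall z, 0 < z -> z < d -> `|P.[z]| <= C * z ^+ m.+1) -> P`_0 = 0.
Proof.
move=> d0 H.
set Q := drop_poly 1 P.
have EP : P = (P`_0)%:P + Q * 'X.
  rewrite -[LHS](poly_take_drop 1) expr1; congr (_ + _).
  by apply/polyP => i; rewrite coef_take_poly coefC; case: i.
set K := \sum_(i < size Q) `|Q`_i|.
have K0 : 0 <= K by apply: sumr_ge0 => i _.
apply/normr0_eq0; apply: (@small_zero R _ (`|C| + K) (Num.min d 1)) => //.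
- by rewrite addr_ge0.
- by rewrite lt_min d0 ltr01.
move=> z z0; rewrite lt_min => /andP [zd z1].
have HQ := @horner_bound R Q z (ltW z0) (ltW z1).
have HP := H z z0 zd.
have : P`_0 = P.[z] - Q.[z] * z.
  by rewrite {2}EP hornerD hornerC hornerM hornerX; ring.
move=> ->.
apply: (le_trans (ler_normB _ _)); rewrite mulrDl.
apply: lerD.
  apply: (le_trans HP); rewrite exprS.
  apply: (le_trans (ler_norm _)); rewrite normrM ler_wpM2l //.
  have z0' := ltW z0; have z1' := ltW z1.
  by rewrite normrM normrX !ger0_norm // ler_piMr // exprn_ile1.
by rewrite normrM (ger0_norm (ltW z0)) ler_wpM2r // ltW.
Qed.

Lemma polyO (R : realType) (m : nat) : forall (P : {poly R}) (C d : R), 0 < d ->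
  (forall z, 0 < z -> z < d -> `|P.[z]| <= C * z ^+ m.+1) ->
  forall k, (k <= m)%N -> P`_k = 0.
Proof.
elim: m => [|m IH] P C d d0 H k km.
  by move: km; rewrite leqn0 => /eqP ->; apply: (polyO0 d0 H).
have P0 := polyO0 d0 H.
set Q := drop_poly 1 P.
have EP : P = Q * 'X.
  rewrite -[LHS](poly_take_drop 1) expr1 -[RHS]add0r; congr (_ + _).
  by apply/polyP => i; rewrite coef_take_poly coef0; case: i.
case: k km => [|k] km; first exact: P0.
have -> : P`_k.+1 = Q`_k by rewrite coef_drop_poly addn1.
apply: (IH Q C d d0) => // z z0 zd.
have := H z z0 zd; rewrite {1}EP hornerM hornerX normrM (ger0_norm (ltW z0)).
by rewrite exprSr mulrA ler_pM2r.
Qed.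

Definition Hyp (R : realType) (p : nat) (t : nat -> R) := forall z : R, `|z| < 1 ->
     exists l : R,
       (Tp_partial p z @ \oo --> l) /\
       (series (fun n => t n * z ^+ n) @ \oo --> l).

Lemma lim_uniq (R : realType) (u : nat -> R) (a b : R) :
  u @ \oo --> a -> u @ \oo --> b -> a = b.
Proof. move=> Ha Hb; exact: (cvg_unique _ Ha Hb). Qed.

Lemma t0_eq1 (R : realType) (p : nat) (t : nat -> R) : prime p -> Hyp p t -> t 0%N = 1.
Proof.
move=> pp H; have [l [H1 H2]] : exists l : R, (Tp_partial p 0 @ \oo --> l) /\ (series (fun n => t n * 0 ^+ n) @ \oo --> l).
  by apply: H; rewrite normr0 ltr01.
have E1 : Tp_partial p (0:R) = fun=> 1.
  apply: funext => N; rewrite /Tp_partial big1 // => j _.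
  by rewrite expr0n expn_eq0 -[p == 0%N]negbK -lt0n prime_gt0 // /= subr0 powR1.
have E2 : (fun N => series (fun n => t n * 0 ^+ n) N.+1) = fun=> t 0%N.
  apply: funext => N; rewrite /series /= big_nat_recl // expr0 mulr1 big1 ?addr0 // => i _.
  by rewrite expr0n mulr0.
rewrite E1 in H1; rewrite -cvg_shiftS /= E2 in H2.
by rewrite -(lim_uniq H2 (cvg_cst _)) (lim_uniq H1 (cvg_cst _)).
Qed.
Lemma powR_pow (R : realType) (x r : R) (n : nat) : (x `^ r) ^+ n = x `^ (r * n%:R).
Proof. by rewrite powRrM powR_mulrn // powR_ge0. Qed.

Lemma Tp_id (R : realType) (p : nat) (z : R) (N : nat) : prime p -> 0 < z -> z < 1 ->
  Tp_partial p z N.+1 ^+ p * (1 - z ^+ p) = Tp_partial p (z ^+ p) N.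
Proof.
move=> pp z0 z1.
have p0 : p%:R != 0 :> R by rewrite pnatr_eq0 -lt0n prime_gt0.
rewrite /Tp_partial big_ltn // exprMn -prodrXl mulrAC.
have -> : powR (1 - z ^+ (p ^ 1)) (- (p ^ 1)%:R^-1) ^+ p * (1 - z ^+ p) = 1.
  rewrite powR_pow expn1 mulNr mulVf // powRN powRr1; last first.
    by rewrite subr_ge0 ltW // exprn_ilt1 ?ltW // -lt0n prime_gt0.
  by rewrite mulVf // subr_eq0 eq_sym lt_eqF // exprn_ilt1 ?ltW // -lt0n prime_gt0.
rewrite mul1r big_add1 /=; apply: eq_bigr => j _.
by rewrite powR_pow expnS exprM natrM invfM mulNr mulrAC mulVf // mul1r.
Qed.

Lemma funeq (R : realType) (p : nat) (t : nat -> R) : prime p -> Hyp p t ->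
  forall z : R, 0 < z -> z < 1 -> forall a b : R,
  series (fun n => t n * z ^+ n) @ \oo --> a ->
  series (fun n => t n * (z ^+ p) ^+ n) @ \oo --> b ->
  a ^+ p * (1 - z ^+ p) = b.
Proof.
move=> pp H z z0 z1 a b Ha Hb.
have hz : `|z| < 1 by rewrite ger0_norm ?ltW.
have [l1 [H1 H1']] := H z hz.
have zp0 : 0 < z ^+ p by rewrite exprn_gt0.
have zp1 : z ^+ p < 1 by rewrite exprn_ilt1 ?ltW // -lt0n prime_gt0.
have hzp : `|z ^+ p| < 1 by rewrite ger0_norm ?ltW.
have [l2 [H2 H2']] := H (z ^+ p) hzp.
rewrite (lim_uniq Ha H1') (lim_uniq Hb H2').
have Hs : (fun N => Tp_partial p z N.+1) @ \oo --> l1 by rewrite cvg_shiftS.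
have Hp : (fun N => Tp_partial p z N.+1 ^+ p) @ \oo --> l1 ^+ p :=
  cvg_comp _ _ Hs (@exprn_continuous R p l1).
have Hq := cvgM Hp (cvg_cst (1 - z ^+ p)).
have Hq' : (fun N => Tp_partial p z N.+1 ^+ p * (1 - z ^+ p)) @ \oo --> l1 ^+ p * (1 - z ^+ p) by apply: Hq.
have E : (fun N => Tp_partial p z N.+1 ^+ p * (1 - z ^+ p)) = Tp_partial p (z ^+ p).
  by apply: funext => N; rewrite Tp_id.
rewrite E in Hq'; exact: lim_uniq Hq' H2.
Qed.

Lemma bound_M (R : realType) (p : nat) (t : nat -> R) : Hyp p t ->
  exists M : R, 0 <= M /\ forall k, `|t k| * (2^-1)^+k <= M.
Proof.
move=> H.
have h2 : `|2^-1 : R| < 1 by rewrite ger0_norm; lra.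
have [l [_ Hl]] := H _ h2.
have Hc : cvgn (series (fun n => t n * 2^-1 ^+ n)) by apply/cvg_ex; exists l.
have H0 := cvg_series_cvg_0 Hc.
have Hb := cvg_seq_bounded (cvgP _ H0).
case: Hb => M0 [_ HM].
exists (`|M0| + 1); split; first by rewrite addr_ge0.
move=> k.
have h1 : M0 < `|M0| + 1 by apply: (le_lt_trans (ler_norm _)); lra.
have := HM (`|M0| + 1) h1 k I.
rewrite /= normrM normrX [`|2^-1|]ger0_norm //; lra.
Qed.

Lemma geom_bound (R : realType) (x : R) (m d : nat) : 0 <= x -> x <= 2^-1 ->
  \sum_(m <= k < m + d) x ^+ k <= 2 * x ^+ m - 2 * x ^+ (m + d).
Proof.
move=> x0 x2; elim: d => [|d IH].
  by rewrite addn0 big_geq // subrr.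
rewrite addnS big_nat_recr ?leq_addr //= exprS.
move: IH; set S := \sum_(_ <= _ < _) _; set y := x ^+ (m + d) => IH.
have y0 : 0 <= y by rewrite exprn_ge0.
have h : 2 * (x * y) <= y by nra.
lra.
Qed.

Lemma geom2 (R : realType) (x : R) (m N : nat) : 0 <= x -> x <= 2^-1 -> (m <= N)%N ->
  \sum_(m <= k < N) x ^+ k <= 2 * x ^+ m.
Proof.
move=> x0 x2 mN; rewrite -(subnKC mN).
apply: (le_trans (geom_bound _ _ x0 x2)).
by rewrite lerBlDr lerDl mulr_ge0 // exprn_ge0.
Qed.

Lemma tail_bound (R : realType) (t : nat -> R) (M : R) (n : nat) (w a : R) :
  0 <= M -> (forall k, `|t k| * (2^-1)^+k <= M) -> 0 < w -> w <= 4^-1 ->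
  series (fun k => t k * w ^+ k) @ \oo --> a ->
  `|a - \sum_(k < n.+1) t k * w ^+ k| <= (2 * M * 2 ^+ n.+1) * w ^+ n.+1.
Proof.
move=> M0 HM w0 w4 Ha.
rewrite -(big_mkord xpredT (fun k => t k * w ^+ k)).
set Fw := \sum_(0 <= k < n.+1) _.
have Hc : (fun N => `|series (fun k => t k * w ^+ k) N - Fw|) @ \oo --> `|a - Fw|.
  apply: cvg_norm; apply: cvgB => //; exact: cvg_cst.
rewrite -(cvg_lim _ Hc) //; apply: limr_le; first exact: cvgP Hc.
exists n.+1 => // N /= HN.
rewrite /series /= (@big_cat_nat _ _ _ n.+1 0 N) // /= -/Fw addrAC subrr add0r.
apply: (le_trans (ler_norm_sum _ _ _)).
apply: (@le_trans _ _ (\sum_(n.+1 <= k < N) M * (2 * w) ^+ k)).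
  apply: ler_sum => k _.
  have -> : `|t k * w ^+ k| = (`|t k| * (2^-1)^+k) * (2 * w) ^+ k.
    rewrite normrM normrX (ger0_norm (ltW w0)) -mulrA -exprMn mulrA mulVf ?mul1r //.
  by rewrite ler_wpM2r // exprn_ge0 // mulr_ge0 // ltW.
rewrite -mulr_sumr.
have h2w0 : 0 <= 2 * w by rewrite mulr_ge0 // ltW.
have h2w2 : 2 * w <= 2^-1 by lra.
apply: (le_trans (ler_wpM2l M0 (geom2 h2w0 h2w2 HN))).
rewrite exprMn; lra.
Qed.

Lemma coef_step (R : comNzRingType) (t : nat -> R) (p n : nat) (F G : {poly R}) :
  (0 < n)%N -> (1 < p)%N -> t 0%N = 1 ->
  F = \poly_(k < n.+1) t k -> G = \poly_(k < n) t k ->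
  (F ^+ p * (1 - 'X^p) - (F \Po 'X^p))`_n =
  (G ^+ p * (1 - 'X^p) - (G \Po 'X^p))`_n + t n * p%:R.
Proof.
move=> n0 p1 t0 EF EG.
have FG : F = G + 'X^n * (t n)%:P.
  apply/polyP => i; rewrite EF EG coefD coefXnM coefC !coef_poly.
  have [lt|gt|->] := ltngtP i n.
  - by rewrite ltnS (ltnW lt) addr0.
  - by rewrite ltnS leqNgt gt subn_eq0 leqNgt gt add0r.
  - by rewrite ltnS leqnn subnn add0r.
set H := \sum_(i < p) F ^+ (p.-1 - i) * G ^+ i.
have E : F ^+ p * (1 - 'X^p) - (F \Po 'X^p) =
   (G ^+ p * (1 - 'X^p) - (G \Po 'X^p)) + 'X^n * ((t n)%:P * H * (1 - 'X^p))
   - (('X^n * (t n)%:P) \Po 'X^p).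
  have : F ^+ p - G ^+ p = (F - G) * H by rewrite subrXX.
  rewrite {2 4}FG addrAC subrr add0r comp_polyD => h.
  have -> : F ^+ p = G ^+ p + 'X^n * (t n)%:P * H by rewrite -h; ring.
  ring.
rewrite E coefB coefD coefXnM ltnn subnn !coef0M.
have -> : ('X^n * (t n)%:P \Po 'X^p)`_n = 0.
  rewrite comp_polyM comp_Xn_poly comp_polyC -exprM coefMC coefXn.
  have -> : (n == p * n)%N = false.
    apply/negbTE; rewrite eq_sym -{2}[n]mul1n eqn_mul2r negb_or -lt0n n0 /=.
    by rewrite neq_ltn p1 orbT.
  by rewrite mul0r.
have -> : H`_0 = p%:R.
  rewrite -horner_coef0 /H horner_sum.
  have F0 : F.[0] = 1 by rewrite EF horner_coef0 coef_poly /= t0.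
  have G0 : G.[0] = 1 by rewrite EG horner_coef0 coef_poly n0 t0.
  under eq_bigr => i _ do rewrite hornerM !horner_exp F0 G0 !expr1n mulr1.
  by rewrite sumr_const card_ord.
rewrite (coefB 1 ('X^p)) coef1 coefXn coefC /= eq_sym eqn0Ngt (ltnW p1) /= !subr0 mulr1.
by [].
Qed.

Lemma step (R : realType) (p : nat) (t : nat -> R) : prime p -> Hyp p t ->
  forall n, (0 < n)%N -> (forall k, (k < n)%N -> t k \in Sq R p.-1) -> t n \in Sq R p.-1.
Proof.
move=> pp H n n0 IH.
have p1 := prime_gt1 pp.
have t0 := t0_eq1 pp H.
have [M [M0 HM]] := bound_M H.
set C := 2 * M * 2 ^+ n.+1.
have C0 : 0 <= C by rewrite mulr_ge0 ?exprn_ge0 // mulr_ge0.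
set K := \sum_(k < n.+1) `|t k|.
have K0 : 0 <= K by apply: sumr_ge0.
set B := K + C.
have B0 : 0 <= B by rewrite addr_ge0.
set F := \poly_(k < n.+1) t k.
set G := \poly_(k < n) t k.
set P := F ^+ p * (1 - 'X^p) - (F \Po 'X^p).
have FE w : F.[w] = \sum_(k < n.+1) t k * w ^+ k by rewrite horner_poly.
have Fb w : 0 <= w -> w <= 1 -> `|F.[w]| <= K.
  move=> w0 w1; rewrite FE; apply: (le_trans (ler_norm_sum _ _ _)); apply: ler_sum => k _.
  by rewrite normrM normrX (ger0_norm w0) ler_piMr // exprn_ile1.
have Pb : forall z, 0 < z -> z < 4^-1 ->
    `|P.[z]| <= (C * (p%:R * B ^+ p.-1) + C) * z ^+ n.+1.
  move=> z z0 z4.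
  have z1 : z < 1 by lra.
  have z0' := ltW z0; have z1' := ltW z1.
  have hz : `|z| < 1 by rewrite ger0_norm.
  have [a [_ Ha]] := H z hz.
  have zp0 : 0 < z ^+ p by rewrite exprn_gt0.
  have zpz : z ^+ p <= z.
    by rewrite -(prednK (prime_gt0 pp)) exprS ler_piMr // exprn_ile1.
  have hzp : `|z ^+ p| < 1 by rewrite ger0_norm ?ltW //; lra.
  have [b [_ Hb]] := H (z ^+ p) hzp.
  have Ef := funeq pp H z0 z1 Ha Hb.
  have ta := @tail_bound R t M n z a M0 HM z0 (ltW z4) Ha.
  have zp4 : z ^+ p <= 4^-1 by lra.
  have tb := @tail_bound R t M n (z ^+ p) b M0 HM zp0 zp4 Hb.
  rewrite -!FE -/C in ta tb.
  have -> : P.[z] = (F.[z] ^+ p - a ^+ p) * (1 - z ^+ p) - (F.[z ^+ p] - b).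
    rewrite /P !hornerE horner_comp !hornerE -Ef; ring.
  rewrite subrXX.
  set S := \sum_(i < p) _.
  have znb : z ^+ n.+1 <= 1 by rewrite exprn_ile1.
  have FB : `|F.[z]| <= B by apply: (le_trans (Fb z z0' z1')); rewrite lerDl.
  have aB : `|a| <= B.
    have -> : a = F.[z] + (a - F.[z]) by ring.
    apply: (le_trans (ler_normD _ _)); apply: lerD; first exact: Fb.
    apply: (le_trans ta); rewrite ler_piMr //.
  have SB : `|S| <= p%:R * B ^+ p.-1.
    apply: (le_trans (ler_norm_sum _ _ _)).
    apply: (@le_trans _ _ (\sum_(i < p) B ^+ p.-1)); last by rewrite sumr_const card_ord mulr_natl.
    apply: ler_sum => i _; rewrite normrM !normrX.
    have -> : B ^+ p.-1 = B ^+ (p.-1 - i) * B ^+ i.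
      by rewrite -exprD subnK // -ltnS prednK ?prime_gt0.
    apply: ler_pM; rewrite ?exprn_ge0 //; apply: lerXn2r; rewrite ?nnegrE ?normr_ge0 //.
  have z1p : `|1 - z ^+ p| <= 1 by rewrite ger0_norm; lra.
  have zn : (z ^+ p) ^+ n.+1 <= z ^+ n.+1.
    by apply: lerXn2r; rewrite ?nnegrE ?exprn_ge0.
  apply: (le_trans (ler_normB _ _)); rewrite !normrM mulrDl.
  apply: lerD.
    rewrite distrC.
    have h := ler_pM (normr_ge0 _) (normr_ge0 _) ta SB.
    apply: (le_trans (ler_piMr _ z1p)); first by rewrite mulr_ge0.
    apply: (le_trans h); rewrite mulrAC.
    done.
  rewrite distrC; apply: (le_trans tb); exact: ler_wpM2l.
have q0 : (0 : R) < 4^-1 by rewrite invr_gt0.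
have Pn := polyO (m:=n) q0 Pb (leqnn n).
rewrite (coef_step (t:=t) n0 p1 t0 erefl erefl) in Pn.
set Q := G ^+ p * (1 - 'X^p) - (G \Po 'X^p) in Pn.
have Go : G \is a polyOver (Sq R p.-1) by apply: polyOver_poly.
have Qo : Q \is a polyOver (Sq R p.-1).
  apply: rpredB; first by apply: rpredM; [exact: rpredX | apply: rpredB; [exact: rpred1 | exact: polyOverXn]].
  by apply: polyOver_comp => //; exact: polyOverXn.
have Qn : Q`_n \in Sq R p.-1 := (polyOverP Qo) n.
have pn0 : p%:R != 0 :> R by rewrite pnatr_eq0 -lt0n prime_gt0.
have -> : t n = - Q`_n * (p%:R)^-1.
  apply: (mulIf pn0); rewrite divfK //; apply/eqP.
  by rewrite -addr_eq0 addrC Pn.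
apply: rpredM; first by rewrite rpredN.
have := Sq_inv R p.-1; by rewrite prednK ?prime_gt0.
Qed.

Theorem proposition1p8 (R : realType) (p : nat) (t : nat -> R) :
  prime p ->
  (forall z : R, `|z| < 1 ->
     exists l : R,
       (Tp_partial p z @ \oo --> l) /\
       (series (fun n => t n * z ^+ n) @ \oo --> l)) ->
  forall n : nat, in_Z_inv_p p (t n).
Proof.
move=> pp H n.
have Hn : t n \in Sq R p.-1.
  elim/ltn_ind: n => n IHn.
  case: n IHn => [|n] IHn; first by rewrite (t0_eq1 pp H) rpred1.
  by apply: (step pp H) => //.
move/asboolP: Hn => [a [k ->]]; exists a, k; by rewrite prednK ?prime_gt0.
Qed.
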